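(* Let $f\colon\mathbb{R}^n\to\mathbb{R}$ be convex and differentiable with $\|\nabla f(x)-\nabla f(y)\|\le L\|x-y\|$ (Euclidean norm, $L>0$), with a minimizer $x_\star$, $f_\star=f(x_\star)$. Let $\theta_0=1$ and $\theta_{k+1}>0$ with $\theta_{k+1}^2-\theta_{k+1}=\theta_k^2$ for $k\ge0$. Given $x_0$, let $y_0=x_0$ and for $k\ge0$: $y_{k+1}=x_k-\frac1L\nabla f(x_k)$, $x_{k+1}=y_{k+1}+\frac{\theta_k-1}{\theta_{k+1}}(y_{k+1}-y_k)+\frac{\theta_k}{\theta_{k+1}}(y_{k+1}-x_k)$. Then for $k=1,2,\dots$, \[ f(y_k)-f_\star\le\frac{L\|x_0-x_\star\|^2}{4\theta_{k-1}^2}=\frac{L\|x_0-x_\star\|^2}{(k+\zeta)^2}-\frac{L\|x_0-x_\star\|^2\log k}{(k+\zeta)^3}+o\!\left(\frac1{k^3}\right), \] where $\zeta$ is the constant defined in the context.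
   Context: For this sequence $\{\theta_k\}$ the limit $\zeta:=\lim_{k\to\infty}\big(2\theta_k-k-1-\tfrac12\log k\big)$ exists (so $\theta_k=\frac{k+\zeta+1}{2}+\frac{\log k}{4}+o(1)$), with $\zeta\approx0.646$. $\log$ is the natural logarithm. *)

(* Defs.v *)
From HB Require Import structures.
From mathcomp Require Import all_boot all_order all_algebra.
From mathcomp Require Import all_classical all_reals all_analysis.
Set Implicit Arguments. Unset Strict Implicit. Unset Printing Implicit Defensive.
Import Order.TTheory GRing.Theory Num.Theory.
Import numFieldNormedType.Exports.
Local Open Scope ring_scope.

Definition dotv (R : realType) (n : nat) (u v : 'rV[R]_n) : R :=
  \sum_(i < n) u ord0 i * v ord0 i.

Definition enorm (R : realType) (n : nat) (v : 'rV[R]_n) : R :=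
  Num.sqrt (dotv v v).

Definition convex_fun (R : realType) (n : nat) (f : 'rV[R]_n -> R) : Prop :=
  forall (x y : 'rV[R]_n) (t : R), 0 <= t -> t <= 1 ->
    f (t *: x + (1 - t) *: y) <= t * f x + (1 - t) * f y.

Definition is_gradient (R : realType) (n : nat) (f : 'rV[R]_n -> R)
  (g : 'rV[R]_n -> 'rV[R]_n) : Prop :=
  forall x : 'rV[R]_n, differentiable f x /\ forall h, 'd f x h = dotv (g x) h.

(* Main.v *)
Require Import Defs.
From HB Require Import structures.
From mathcomp Require Import all_boot all_order all_algebra.
From mathcomp Require Import all_classical all_reals all_analysis.
From mathcomp Require Import ring lra.
Import Order.TTheory GRing.Theory Num.Theory.
Import numFieldNormedType.Exports.
Local Open Scope classical_set_scope.
Local Open Scope ring_scope.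

Section Dot.
Context {R : realType} {n : nat}.
Implicit Types u v w : 'rV[R]_n.

Lemma dotvC u v : dotv u v = dotv v u.
Proof. by rewrite /dotv; apply: eq_bigr => i _; rewrite mulrC. Qed.

Lemma dotvDl u v w : dotv (u + v) w = dotv u w + dotv v w.
Proof. by rewrite /dotv -big_split; apply: eq_bigr => i _; rewrite mxE mulrDl. Qed.

Lemma dotvZl a u v : dotv (a *: u) v = a * dotv u v.
Proof. by rewrite /dotv mulr_sumr; apply: eq_bigr => i _; rewrite mxE mulrA. Qed.

Lemma dotvNl u v : dotv (- u) v = - dotv u v.
Proof. by rewrite -scaleN1r dotvZl mulN1r. Qed.

Lemma dotvBl u v w : dotv (u - v) w = dotv u w - dotv v w.
Proof. by rewrite dotvDl dotvNl. Qed.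

Lemma dotvDr u v w : dotv u (v + w) = dotv u v + dotv u w.
Proof. by rewrite dotvC dotvDl !(dotvC u). Qed.
Lemma dotvZr a u v : dotv u (a *: v) = a * dotv u v.
Proof. by rewrite dotvC dotvZl dotvC. Qed.
Lemma dotvNr u v : dotv u (- v) = - dotv u v.
Proof. by rewrite dotvC dotvNl dotvC. Qed.
Lemma dotvBr u v w : dotv u (v - w) = dotv u v - dotv u w.
Proof. by rewrite dotvDr dotvNr. Qed.

Lemma dotv_ge0 u : 0 <= dotv u u.
Proof. by apply: sumr_ge0 => i _; by rewrite -expr2 sqr_ge0. Qed.

Lemma enorm2 u : enorm u ^+ 2 = dotv u u.
Proof. by rewrite /enorm sqr_sqrtr // dotv_ge0. Qed.

Lemma dotv0l u : dotv 0 u = 0.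
Proof. by rewrite /dotv big1 // => i _; rewrite mxE mul0r. Qed.
End Dot.


Lemma grad_ineq (R : realType) (n : nat) (f : 'rV[R]_n -> R) g :
  convex_fun f -> is_gradient f g -> forall x y, f x + dotv (g x) (y - x) <= f y.
Proof.
move=> cf gf x y; set h := y - x.
have [dfx dg] := gf x.
rewrite -dg -deriveE //.
have dh : derivable f x h by apply: diff_derivable.
rewrite -lerBrDl.
set F := (fun t : R => t^-1 *: ((f \o shift x) (t *: h) - f x)).
have : F @ 0^'+ --> 'D_h f x.
  have dh' : F @ 0^' --> 'D_h f x := dh.
  apply: (cvg_trans _ dh') => P /=.
  rewrite !nbhs_simpl /= /dnbhs /at_right /within => H.
  move: H => /= H; apply: filterS H => u /= Hu u0; apply: Hu => /=.
  by rewrite gt_eqF.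
move/cvgr_to_le; apply.
near=> t.
have t0 : 0 < t by near: t; exact: nbhs_right_gt.
have t1 : t <= 1 by near: t; exact: nbhs_right_le ltr01.
rewrite /F /= -[X in _ <= X](mulKf (lt0r_neq0 t0)).
rewrite [_ *: _]/(_ * _) ler_pM2l ?invr_gt0 //.
have -> : t *: h + x = t *: y + (1 - t) *: x.
  by apply/matrixP => i j; rewrite /h !mxE; ring.
rewrite lerBlDr.
apply: le_trans (cf y x t (ltW t0) t1) _.
by rewrite mulrBr mulrBl mul1r; lra.
Unshelve. all: by end_near. Qed.


Lemma line_is_derive (R : realType) (n : nat) (f : 'rV[R]_n -> R) g (x h : 'rV[R]_n) (t : R) :
  is_gradient f g ->
  is_derive t 1 (fun s : R => f (s *: h + x)) (dotv (g (t *: h + x)) h).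
Proof.
move=> gf; have [df dg] := gf (t *: h + x).
have E : (fun s : R => s^-1 *: (((fun s : R => f (s *: h + x)) \o shift t) (s *: 1)
             - (fun s : R => f (s *: h + x)) t))
       = (fun s : R => s^-1 *: ((f \o shift (t *: h + x)) (s *: h) - f (t *: h + x))).
  apply: funext => s /=; congr (_ *: (f _ - _)).
  by rewrite [s%:A]mulr1 scalerDl addrA.
have dv : derivable f (t *: h + x) h by apply: diff_derivable.
apply: DeriveDef.
  by rewrite /derivable E.
by rewrite /derive E -dg -deriveE.
Qed.

Lemma dot_amgm (R : realType) (n : nat) (a h : 'rV[R]_n) (c : R) : 0 < c ->
  2 * c * dotv a h <= dotv a a + c ^+ 2 * dotv h h.
Proof.
move=> c0.
have := dotv_ge0 (a - c *: h).
rewrite !dotvBl !dotvBr !dotvZl !dotvZr (dotvC h a).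
move=> H; nra.
Qed.

Lemma lip2 (R : realType) (n : nat) (a b : 'rV[R]_n) (L : R) : 0 <= L ->
  enorm a <= L * enorm b -> dotv a a <= L ^+ 2 * dotv b b.
Proof.
move=> L0 H; rewrite -!enorm2.
have a0 : 0 <= enorm a by rewrite /enorm sqrtr_ge0.
have b0 : 0 <= enorm b by rewrite /enorm sqrtr_ge0.
nra.
Qed.

Lemma descent (R : realType) (n : nat) (f : 'rV[R]_n -> R) g (L : R) :
  is_gradient f g -> 0 < L ->
  (forall u v, enorm (g u - g v) <= L * enorm (u - v)) ->
  forall x y, f y <= f x + dotv (g x) (y - x) + L / 2 * dotv (y - x) (y - x).
Proof.
move=> gf L0 lip x y.
set h := y - x; set c := dotv (g x) h; set d := dotv h h.
pose p : {poly R} := c *: 'X + (L / 2 * d) *: 'X^2.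
pose phi := fun s : R => f (s *: h + x) - p.[s].
have dphi (s : R) : is_derive s 1 phi (dotv (g (s *: h + x)) h - (deriv p).[s]).
  have := is_deriveB (@line_is_derive R n f g x h s gf) (is_derive_poly p s).
  by [].
have cont : {within `[0, 1], continuous phi}.
  by apply: derivable_within_continuous => s _; exact: ex_derive.
have [c0 c0in E] := MVT ltr01 (fun s _ => dphi s) cont.
have Hp s : p.[s] = c * s + L / 2 * d * s ^+ 2 by rewrite /p !hornerE; ring.
have Hdp s : (deriv p).[s] = c + L * d * s.
  by rewrite /p !poly.derivE !hornerE /=; field.
move: E; rewrite /phi !Hp Hdp scale1r scale0r add0r /h subrK -/h.
have ain : 0 < c0 < 1 by move: c0in; rewrite in_itv.
case/andP: ain => c0p c01.
set a := g (c0 *: h + x) - g x.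
have H1 := @dot_amgm R n a h (L * c0) (mulr_gt0 L0 c0p).
have H2 : dotv a a <= L ^+ 2 * (c0 ^+ 2 * d).
  have := @lip2 R n _ _ L (ltW L0) (lip (c0 *: h + x) x).
  by rewrite addrK dotvZl dotvZr -/a -/d [c0 ^+ 2]expr2 -mulrA.
have H3 : dotv (g (c0 *: h + x)) h = dotv a h + c by rewrite /a dotvBl /c; ring.
rewrite H3 => E.
have Lc : 0 < 2 * (L * c0) by rewrite mulr_gt0 // mulr_gt0.
have H4 : dotv a h <= L * c0 * d.
  rewrite -(ler_pM2l Lc); apply: (le_trans H1).
  have -> : 2 * (L * c0) * (L * c0 * d) = L ^+ 2 * (c0 ^+ 2 * d) + (L * c0) ^+ 2 * d by ring.
  by rewrite lerD2r.
nra.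
Qed.


Lemma dot_expand (R : realType) (n : nat) (w g : 'rV[R]_n) (c : R) :
  dotv (w - c *: g) (w - c *: g) = dotv w w - 2 * c * dotv g w + c ^+ 2 * dotv g g.
Proof.
rewrite !dotvBl !dotvBr !dotvZl !dotvZr (dotvC w g); ring.
Qed.

Lemma step_ineq (R : realType) (n : nat) (g gp x xp xs zk : 'rV[R]_n)
  (f fp fs L th thp : R) :
  0 < L -> 0 < th -> th ^+ 2 - th = thp ^+ 2 ->
  f + dotv g (xs - x) + dotv g g / (2 * L) <= fs ->
  f + dotv g (xp - x) + dotv (g - gp) (g - gp) / (2 * L) <= fp ->
  zk = th *: x - (th - 1) *: (xp - L^-1 *: gp) ->
  2 * th ^+ 2 * (f - fs - dotv g g / (2 * L))
    + L / 2 * dotv (zk - (2 * th / L) *: g - xs) (zk - (2 * th / L) *: g - xs)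
  <= 2 * thp ^+ 2 * (fp - fs - dotv gp gp / (2 * L))
    + L / 2 * dotv (zk - xs) (zk - xs).
Proof.
move=> L0 th0 Hth I1 I2 Hz.
have -> : zk - (2 * th / L) *: g - xs = (zk - xs) - (2 * th / L) *: g.
  by rewrite addrAC.
rewrite dot_expand.
have E2 : dotv g (zk - xs) = th * dotv g x - (th - 1) * dotv g xp
     + (th - 1) / L * dotv g gp - dotv g xs.
  by rewrite Hz !(dotvBr, dotvDr, dotvNr, dotvZr); ring.
set W := dotv (zk - xs) (zk - xs).
move: I1 I2; rewrite E2 !(dotvBr, dotvBl) (dotvC gp g) -Hth.
set A := dotv g g; set B := dotv gp gp; set C := dotv g gp.
set X := dotv g x; set Xp := dotv g xp; set Xs := dotv g xs.
move=> I1 I2.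
have s1 : 0 <= fs - (f + (Xs - X) + A / (2 * L)) by rewrite subr_ge0.
have s2 : 0 <= fp - (f + (Xp - X) + (A - C - (C - B)) / (2 * L)) by rewrite subr_ge0.
have th1 : 0 <= th ^+ 2 - th by rewrite Hth sqr_ge0.
rewrite -subr_ge0.
have -> : 2 * (th ^+ 2 - th) * (fp - fs - B / (2 * L)) + L / 2 * W -
  (2 * th ^+ 2 * (f - fs - A / (2 * L)) +
   L / 2 * (W - 2 * (2 * th / L) * (th * X - (th - 1) * Xp + (th - 1) / L * C - Xs) +
     (2 * th / L) ^+ 2 * A))
  = 2 * (th ^+ 2 - th) * (fp - (f + (Xp - X) + (A - C - (C - B)) / (2 * L)))
    + 2 * th * (fs - (f + (Xs - X) + A / (2 * L))).
  by field; rewrite gt_eqF.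
by rewrite addr_ge0 // mulr_ge0 // mulr_ge0 // ltW.
Qed.

Lemma init_ineq (R : realType) (n : nat) (g x xs : 'rV[R]_n) (f fs L : R) :
  0 < L ->
  f + dotv g (xs - x) + dotv g g / (2 * L) <= fs ->
  2 * 1 ^+ 2 * (f - fs - dotv g g / (2 * L))
    + L / 2 * dotv (x - (2 * 1 / L) *: g - xs) (x - (2 * 1 / L) *: g - xs)
  <= L / 2 * dotv (x - xs) (x - xs).
Proof.
move=> L0 I1.
have -> : x - (2 * 1 / L) *: g - xs = (x - xs) - (2 * 1 / L) *: g by rewrite addrAC.
rewrite dot_expand; set W := dotv (x - xs) (x - xs); move: I1; rewrite !dotvBr.
set A := dotv g g; set X := dotv g x; set Xs := dotv g xs.
move=> I1.
have s1 : 0 <= fs - (f + (Xs - X) + A / (2 * L)) by rewrite subr_ge0.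
rewrite -subr_ge0.
have -> : L / 2 * W - (2 * 1 ^+ 2 * (f - fs - A / (2 * L)) +
   L / 2 * (W - 2 * (2 * 1 / L) * (X - Xs) + (2 * 1 / L) ^+ 2 * A))
  = 2 * (fs - (f + (Xs - X) + A / (2 * L))).
  by field; rewrite gt_eqF.
by rewrite mulr_ge0.
Qed.

Arguments grad_ineq {R n f g}.
Arguments descent {R n f g L}.

Lemma coco_alg (R : realType) (n : nat) (gx gy x y z : 'rV[R]_n) (fx fy fz L : R) :
  0 < L -> z = y - L^-1 *: (gy - gx) ->
  fx + dotv gx (z - x) <= fz ->
  fz <= fy + dotv gy (z - y) + L / 2 * dotv (z - y) (z - y) ->
  fx + dotv gx (y - x) + dotv (gx - gy) (gx - gy) / (2 * L) <= fy.
Proof.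
move=> L0 -> H1 H2.
move: H1 H2.
rewrite !(dotvBr, dotvBl, dotvDr, dotvDl, dotvNr, dotvNl, dotvZr, dotvZl).
rewrite ?(dotvC gy gx) ?(dotvC y gx) ?(dotvC x gx) ?(dotvC y gy) ?(dotvC x gy).
set a := dotv gx gx; set b := dotv gx gy; set c := dotv gy gy.
set p := dotv gx y; set q := dotv gx x; set r := dotv gy y; set u := dotv y y.
set v := dotv gx y.
move=> H1 H2.
have Lu : L != 0 by rewrite gt_eqF.
have E2 : L / 2 *
  (u - L^-1 * (r - p) +
   (- (L^-1 * (r - p)) -
    - (L^-1 * (L^-1 * (c - b) - L^-1 * (b - a)))) -
   (u - L^-1 * (r - p)) -
   (u - L^-1 * (r - p) - u)) = L^-1 * (a - 2 * b + c) / 2 by field.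
have E3 : (a - b - (b - c)) / (2 * L) = L^-1 * (a - 2 * b + c) / 2 by field.
move: H2; rewrite E2 => H2; rewrite E3.

lra.
Qed.

Lemma cocoercive (R : realType) (n : nat) (f : 'rV[R]_n -> R) g (L : R) :
  convex_fun f -> is_gradient f g -> 0 < L ->
  (forall u v, enorm (g u - g v) <= L * enorm (u - v)) ->
  forall x y, f x + dotv (g x) (y - x) + dotv (g x - g y) (g x - g y) / (2 * L) <= f y.
Proof.
move=> cf gf L0 lip x y.
set z := y - L^-1 *: (g y - g x).
apply: (@coco_alg R n (g x) (g y) x y z (f x) (f y) (f z) L L0 (erefl z)).
  exact: grad_ineq cf gf x z.
exact: descent gf L0 lip y z.
Qed.

Lemma dotv_eq0 (R : realType) (n : nat) (u : 'rV[R]_n) : dotv u u = 0 -> u = 0.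
Proof.
rewrite /dotv => /eqP; rewrite psumr_eq0 => [/allP H|i _]; last by rewrite -expr2 sqr_ge0.
apply/rowP => i; rewrite mxE.
have := H i (mem_index_enum i); rewrite implyTb -expr2 sqrf_eq0 => /eqP.
by have -> : (ord0 : 'I_1) = 0 by apply/val_inj.
Qed.

Lemma gstar0 (R : realType) (n : nat) (f : 'rV[R]_n -> R) g (L : R) xs :
  is_gradient f g -> 0 < L ->
  (forall u v, enorm (g u - g v) <= L * enorm (u - v)) ->
  (forall u, f xs <= f u) -> g xs = 0.
Proof.
move=> gf L0 lip fmin.
set y := xs - L^-1 *: g xs.
have H := descent gf L0 lip xs y.
have := fmin y.
have Ey : y - xs = -(L^-1 *: g xs) by rewrite /y addrAC subrr add0r.
move: H; rewrite Ey !(dotvNl, dotvNr, dotvZl, dotvZr) opprK.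
have A0 := dotv_ge0 (g xs).
set A := dotv (g xs) (g xs) => H1 H2.
apply: dotv_eq0; apply/eqP; rewrite eq_le A0 andbT.
have E : L / 2 * (L^-1 * (L^-1 * A)) = L^-1 * A / 2 by field; rewrite gt_eqF.
have : L^-1 * A <= 0 by move: H1; rewrite E; lra.
by rewrite pmulr_rle0 // invr_gt0.
Qed.

Arguments grad_ineq {R n f g}.
Arguments descent {R n f g L}.
Arguments cocoercive {R n f g L}.
Arguments gstar0 {R n f g L xs}.
Arguments init_ineq {R n g x xs f fs L}.
Arguments step_ineq {R n g gp x xp xs zk f fp fs L th thp}.

Lemma part1 (R : realType) (n : nat) (f : 'rV[R]_n -> R)
  (gradf : 'rV[R]_n -> 'rV[R]_n) (L : R) (xstar : 'rV[R]_n)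
  (theta : nat -> R) (x y : nat -> 'rV[R]_n) :
  convex_fun f ->
  is_gradient f gradf ->
  0 < L ->
  (forall u v, enorm (gradf u - gradf v) <= L * enorm (u - v)) ->
  (forall u, f xstar <= f u) ->
  theta 0%N = 1 ->
  (forall k : nat, 0 < theta k.+1 /\ theta k.+1 ^+ 2 - theta k.+1 = theta k ^+ 2) ->
  y 0%N = x 0%N ->
  (forall k : nat, y k.+1 = x k - L^-1 *: gradf (x k)) ->
  (forall k : nat, x k.+1 = y k.+1 + ((theta k - 1) / theta k.+1) *: (y k.+1 - y k)
                                   + (theta k / theta k.+1) *: (y k.+1 - x k)) ->
  forall k : nat, (1 <= k)%N ->
     f (y k) - f xstar <= L * enorm (x 0%N - xstar) ^+ 2 / (4 * theta k.-1 ^+ 2).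
Proof.
move=> cf gf L0 lip fmin th0 thS y0 hy hx.
have gs0 := gstar0 gf L0 lip fmin.
have Lu : L != 0 by rewrite gt_eqF.
have thpos k : 0 < theta k by case: k => [|k]; [rewrite th0 ltr01 | case: (thS k)].
pose G k := gradf (x k).
have I1 k : f (x k) + dotv (G k) (xstar - x k) + dotv (G k) (G k) / (2 * L) <= f xstar.
  by have := cocoercive cf gf L0 lip (x k) xstar; rewrite gs0 subr0.
have I2 k : f (x k.+1) + dotv (G k.+1) (x k - x k.+1)
    + dotv (G k.+1 - G k) (G k.+1 - G k) / (2 * L) <= f (x k).
  exact: cocoercive cf gf L0 lip (x k.+1) (x k).
pose z k := theta k *: x k - (theta k - 1) *: y k.
have Zrec k : z k.+1 = z k - (2 * theta k / L) *: G k.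
  have tk := thpos k.+1.
  rewrite /z hx hy /G; apply/matrixP => i j; rewrite !mxE.
  by field; rewrite Lu gt_eqF.
pose Phi k := 2 * theta k ^+ 2 * (f (x k) - f xstar - dotv (G k) (G k) / (2 * L))
   + L / 2 * dotv (z k.+1 - xstar) (z k.+1 - xstar).
have Phi0 : Phi 0%N <= L / 2 * dotv (x 0%N - xstar) (x 0%N - xstar).
  have z0 : z 0%N = x 0%N by rewrite /z th0 subrr scale0r subr0 scale1r.
  rewrite /Phi Zrec z0 th0; exact: init_ineq L0 (I1 0%N).
have PhiS k : Phi k.+1 <= Phi k.
  rewrite /Phi (Zrec k.+1); case: (thS k) => tp Hth.
  apply: step_ineq L0 tp Hth (I1 k.+1) (I2 k) _.
  by rewrite /z hy.
have PhiB k : Phi k <= L / 2 * dotv (x 0%N - xstar) (x 0%N - xstar).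
  elim: k => [//|k IH]; exact: le_trans (PhiS k) IH.
case=> [//|k] _ /=.
have D := descent gf L0 lip (x k) (y k.+1).
have Ey : y k.+1 - x k = - (L^-1 *: G k) by rewrite hy addrAC subrr add0r.
move: D; rewrite Ey !(dotvNl, dotvNr, dotvZl, dotvZr) opprK => D.
have P := PhiB k; rewrite /Phi in P.
have W0 := dotv_ge0 (z k.+1 - xstar).
have tk := thpos k.
rewrite enorm2 ler_pdivlMr ?mulr_gt0 ?exprn_gt0 //.
set A := dotv (G k) (G k) in D P.
set Q := dotv (z k.+1 - xstar) (z k.+1 - xstar) in P W0.
set S := dotv (x 0%N - xstar) (x 0%N - xstar) in P *.
have E : L / 2 * (L^-1 * (L^-1 * A)) = A / (2 * L) by field.
rewrite E in D.
have H3 : 2 * theta k ^+ 2 * (f (x k) - f xstar - A / (2 * L)) <= L / 2 * S.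
  have : 0 <= L / 2 * Q by rewrite mulr_ge0 // divr_ge0 // ltW.
  lra.
have H4 : f (y k.+1) - f xstar <= f (x k) - f xstar - A / (2 * L).
  move: D; rewrite -/(G k); lra.
have t2 : 0 <= theta k ^+ 2 by rewrite sqr_ge0.
have : (f (y k.+1) - f xstar) * (2 * theta k ^+ 2) <= L / 2 * S.
  apply: le_trans H3; rewrite mulrC; apply: ler_wpM2l => //.
  by rewrite mulr_ge0.
move=> H5.
have -> : (f (y k.+1) - f xstar) * (4 * theta k ^+ 2) = 2 * ((f (y k.+1) - f xstar) * (2 * theta k ^+ 2)) by ring.
have -> : L * S = 2 * (L / 2 * S) by field.
by rewrite ler_pM2l.
Qed.


Section Asym.
Context {R : realType}.

Lemma limB {u v : nat -> R} {a b : R} : u @ \oo --> a -> v @ \oo --> b ->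
  (fun k => u k - v k) @ \oo --> a - b.
Proof. by move=> hu hv; apply: cvgB. Qed.
Lemma limD {u v : nat -> R} {a b : R} : u @ \oo --> a -> v @ \oo --> b ->
  (fun k => u k + v k) @ \oo --> a + b.
Proof. by move=> hu hv; apply: cvgD. Qed.
Lemma limM {u v : nat -> R} {a b : R} : u @ \oo --> a -> v @ \oo --> b ->
  (fun k => u k * v k) @ \oo --> a * b.
Proof. by move=> hu hv; apply: cvgM. Qed.
Lemma limV {u : nat -> R} {a : R} : a != 0 -> u @ \oo --> a ->
  (fun k => (u k)^-1) @ \oo --> a^-1.
Proof. by move=> a0 hu; apply: cvgV. Qed.
Lemma limC (a : R) : (fun k : nat => a) @ \oo --> a.
Proof. exact: cvg_cst. Qed.

Lemma inv_cvg0 : (fun k : nat => (k%:R : R)^-1) @ \oo --> 0.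
Proof.
apply/gtr0_cvgV0; last exact: cvgr_idn.
near=> k; rewrite ltr0n; near: k; exact: nbhs_infty_gt.
Unshelve. all: by end_near. Qed.

Lemma sqrt_inv_cvg0 : (fun k : nat => Num.sqrt ((k%:R : R)^-1)) @ \oo --> 0.
Proof.
rewrite -sqrtr0.
exact: (continuous_cvg _ (@sqrt_continuous R 0) inv_cvg0).
Qed.

Lemma dln_cvg0 : (fun k : nat => ln (k.+1%:R : R) - ln k%:R) @ \oo --> 0.
Proof.
apply: (@squeeze_cvgr _ _ _ _ (fun _ => 0) (fun k : nat => (k%:R : R)^-1)); last first.
- exact: inv_cvg0.
- exact: cvg_cst.
near=> k.
have k0 : (0 < k%:R :> R) by rewrite ltr0n; near: k; exact: nbhs_infty_gt.
have E : (k.+1%:R : R) = k%:R * (1 + k%:R^-1).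
  by rewrite mulrDr mulr1 mulfV ?gt_eqF // -natr1.
have p1 : 0 < 1 + (k%:R : R)^-1 by rewrite addr_gt0 ?invr_gt0.
rewrite E lnM ?posrE // addrAC subrr add0r.
rewrite ln_ge0 /=; last by rewrite lerDl invr_ge0 ltW.
apply: le_ln1Dx; apply: (lt_le_trans (y := 0)); first by rewrite ltrN10.
by rewrite invr_ge0 ltW.
Unshelve. all: by end_near. Qed.


Lemma lnsq_cvg0 : (fun k : nat => ln (k%:R : R) ^+ 2 / k%:R) @ \oo --> 0.
Proof.
apply: (@squeeze_cvgr _ _ _ _ (fun _ => 0)
   (fun k : nat => 16 * Num.sqrt ((k%:R : R)^-1))); last first.
- by rewrite -(mulr0 16); apply: cvgMl_tmp; exact: sqrt_inv_cvg0.
- exact: cvg_cst.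
near=> k.
have k0 : (0 < k%:R :> R) by rewrite ltr0n; near: k; exact: nbhs_infty_gt.
have k1 : (1 <= k%:R :> R) by rewrite ler1n; near: k; exact: nbhs_infty_gt.
set K := (k%:R : R) in k0 k1 *.
set r := Num.sqrt (Num.sqrt K).
have sK : 0 < Num.sqrt K by rewrite sqrtr_gt0.
have r0 : 0 < r by rewrite sqrtr_gt0.
have Er : K = r ^+ 4.
  have -> : (4 = 2 * 2)%N by [].
  by rewrite exprM /r sqr_sqrtr ?ltW // sqr_sqrtr ?ltW.
have El : ln K = 4 * ln r by rewrite Er lnXn // mulr_natl.
have lr := ln_sublinear r0.
have l0 : 0 <= ln K by rewrite ln_ge0.
have lK : ln K <= 4 * r by rewrite El; lra.
have Er2 : r ^+ 2 = Num.sqrt K by rewrite /r sqr_sqrtr ?ltW.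
apply/andP; split; first by rewrite divr_ge0 ?sqr_ge0 ?ltW.
rewrite (sqrtrV (ltW k0)) ler_pdivlMr //.
have EK : K = Num.sqrt K * Num.sqrt K by rewrite -expr2 sqr_sqrtr ?ltW.
have -> : ln K ^+ 2 / K * Num.sqrt K = ln K ^+ 2 / Num.sqrt K.
  move: sK EK; set s := Num.sqrt K => sK EK.
  rewrite EK; field; by rewrite gt_eqF.
rewrite ler_pdivrMr //; nra.
Unshelve. all: by end_near. Qed.

Lemma lnk_cvg0 : (fun k : nat => ln (k%:R : R) / k%:R) @ \oo --> 0.
Proof.
apply: (@squeeze_cvgr _ _ _ _ (fun _ => 0)
   (fun k : nat => ln (k%:R : R) ^+ 2 / k%:R + (k%:R : R)^-1)); last first.
- by rewrite -(addr0 0); apply: cvgD; [exact: lnsq_cvg0 | exact: inv_cvg0].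
- exact: cvg_cst.
near=> k.
have k0 : (0 < k%:R :> R) by rewrite ltr0n; near: k; exact: nbhs_infty_gt.
have k1 : (1 <= k%:R :> R) by rewrite ler1n; near: k; exact: nbhs_infty_gt.
set K := (k%:R : R) in k0 k1 *.
have l0 : 0 <= ln K by rewrite ln_ge0.
apply/andP; split; first by rewrite divr_ge0 // ltW.
have -> : ln K ^+ 2 / K + K^-1 = (ln K ^+ 2 + 1) / K by rewrite mulrDl mul1r.
apply: ler_wpM2r; first by rewrite invr_ge0 ltW.
nra.
Unshelve. all: by end_near. Qed.


Lemma part2 (theta : nat -> R) (zeta C : R) :
  theta 0%N = 1 ->
  (forall k : nat, 0 < theta k.+1 /\ theta k.+1 ^+ 2 - theta k.+1 = theta k ^+ 2) ->
  (fun k : nat => 2 * theta k - k%:R - 1 - ln (k%:R) / 2) @ \oo --> zeta ->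
  (fun k : nat => k%:R ^+ 3 *
      (C / (4 * theta k.-1 ^+ 2)
       - (C / (k%:R + zeta) ^+ 2 - C * ln (k%:R) / (k%:R + zeta) ^+ 3)))
    @ \oo --> (0 : R).
Proof.
move=> th0 thS he.
have thpos k : 0 < theta k by case: k => [|k]; [rewrite th0 ltr01 | case: (thS k)].
pose e k := 2 * theta k - k%:R - 1 - ln (k%:R : R) / 2.
pose c k := 2 * theta k.-1 - k%:R - zeta - ln (k%:R : R) / 2.
have hc : c @ \oo --> 0.
  rewrite -cvg_shiftS.
  have -> : (fun n => c n.+1) = (fun j => (e j - zeta) - (ln (j.+1%:R : R) - ln j%:R) / 2).
    apply/funext => j; rewrite /c /e /= -natr1; ring.
  have h1 : (fun j => e j - zeta) @ \oo --> 0.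
    by have := limB he (limC zeta); rewrite subrr.
  have h2 : (fun j : nat => (ln (j.+1%:R : R) - ln j%:R) / 2) @ \oo --> 0.
    by have := limM dln_cvg0 (limC (2^-1)); rewrite mul0r.
  by have := limB h1 h2; rewrite subrr.
pose iv k := (k%:R : R)^-1.
pose p k := ln (k%:R : R) / k%:R.
pose q k := ln (k%:R : R) ^+ 2 / k%:R.
pose A k := 1 + zeta * iv k.
pose Ai k := (A k)^-1.
pose B k := p k / 2 + c k * iv k.
pose Q k := A k * (A k + B k)^-1.
pose bl k := q k / 2 + c k * p k.
pose b2 k := q k / 4 + c k * p k + c k * c k * iv k.
pose M k := -2 * c k + (2 * bl k + p k * b2 k * Ai k - b2 k) * Ai k.
pose T k := C * (Ai k * Ai k * Ai k) * (Q k * Q k) * M k.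
have hiv : iv @ \oo --> 0 := inv_cvg0.
have hp : p @ \oo --> 0 := lnk_cvg0.
have hq : q @ \oo --> 0 := lnsq_cvg0.
have hA : A @ \oo --> (1 : R).
  by have := limD (limC 1) (limM (limC zeta) hiv); rewrite mulr0 addr0.
have hAi : Ai @ \oo --> (1 : R).
  by have := limV (oner_neq0 R) hA; rewrite invr1.
have hB : B @ \oo --> 0.
  by have := limD (limM hp (limC 2^-1)) (limM hc hiv); rewrite !mul0r addr0.
have hQ : Q @ \oo --> (1 : R).
  have hAB := limD hA hB; rewrite addr0 in hAB.
  by have := limM hA (limV (oner_neq0 R) hAB); rewrite invr1 mulr1.
have hbl : bl @ \oo --> 0.
  by have := limD (limM hq (limC 2^-1)) (limM hc hp); rewrite !mul0r addr0.
have hb2 : b2 @ \oo --> 0.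
  by have := limD (limD (limM hq (limC 4^-1)) (limM hc hp)) (limM (limM hc hc) hiv);
    rewrite !mul0r !addr0.
have hM : M @ \oo --> 0.
  have := limD (limM (limC (-2)) hc)
    (limM (limB (limD (limM (limC 2) hbl) (limM (limM hp hb2) hAi)) hb2) hAi).
  by rewrite !(mulr0, mul0r, addr0, subr0, mulr1).
have hT : T @ \oo --> 0.
  have := limM (limM (limM (limC C) (limM (limM hAi hAi) hAi)) (limM hQ hQ)) hM.
  by rewrite mulr0.
apply: cvg_trans hT.
apply: near_eq_cvg.
near=> k.
have k1 : `|zeta| + 1 <= k%:R :> R by near: k; exact: nbhs_infty_ger.
have n0 := normr_ge0 zeta.
have k0 : 0 < k%:R :> R by lra.
have kz : 0 < k%:R + zeta :> R.
  have := ler_norm (- zeta); rewrite normrN; lra.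
have tk := thpos k.-1.
rewrite /T /M /Q /Ai /A /B /bl /b2 /p /q /iv /c.
field.
have E4 : (k%:R + zeta) * 2 + (ln (k%:R : R) + ((2 * theta k.-1 - k%:R - zeta) * 2
   - ln (k%:R : R))) = 4 * theta k.-1 by ring.
by rewrite E4 (gt_eqF kz) (gt_eqF tk) (gt_eqF k0) gt_eqF ?mulr_gt0.
Unshelve. all: by end_near. Qed.

End Asym.

Theorem corollary1 (R : realType) (n : nat) (f : 'rV[R]_n -> R)
  (gradf : 'rV[R]_n -> 'rV[R]_n) (L : R) (xstar : 'rV[R]_n)
  (theta : nat -> R) (zeta : R) (x y : nat -> 'rV[R]_n) :
  convex_fun f ->
  is_gradient f gradf ->
  0 < L ->
  (forall u v, enorm (gradf u - gradf v) <= L * enorm (u - v)) ->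
  (forall u, f xstar <= f u) ->
  theta 0%N = 1 ->
  (forall k : nat, 0 < theta k.+1 /\ theta k.+1 ^+ 2 - theta k.+1 = theta k ^+ 2) ->
  (fun k : nat => 2 * theta k - k%:R - 1 - ln (k%:R) / 2) @ \oo --> zeta ->
  y 0%N = x 0%N ->
  (forall k : nat, y k.+1 = x k - L^-1 *: gradf (x k)) ->
  (forall k : nat, x k.+1 = y k.+1 + ((theta k - 1) / theta k.+1) *: (y k.+1 - y k)
                                   + (theta k / theta k.+1) *: (y k.+1 - x k)) ->
  let C := L * enorm (x 0%N - xstar) ^+ 2 in
  (forall k : nat, (1 <= k)%N ->
     f (y k) - f xstar <= C / (4 * theta k.-1 ^+ 2)) /\
  (fun k : nat => k%:R ^+ 3 *
      (C / (4 * theta k.-1 ^+ 2)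
       - (C / (k%:R + zeta) ^+ 2 - C * ln (k%:R) / (k%:R + zeta) ^+ 3)))
    @ \oo --> (0 : R).
Proof.
move=> cf gf L0 lip fmin th0 thS he y0 hy hx C.
split.
  exact: (@part1 R n f gradf L xstar theta x y cf gf L0 lip fmin th0 thS y0 hy hx).
exact: part2 th0 thS he.
Qed.
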